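(* Let $1>R>\tfrac12$ and $R>P>0$, and let $$\mathrm{ZDSstrip}=\{(x,y)\in\mathbb R^2:\ x\ge -1\ge y,\ -R^{-1}\ge x+y\ge -P^{-1}\}.$$ Assume $(\bar\alpha,\bar\beta)\in\mathrm{ZDSstrip}$ with $\bar\alpha+\bar\beta=-Z^{-1}$. Then $-\bar\beta\ge\max(1,|\bar\alpha|)$, and $-\bar\beta=|\bar\alpha|$ if and only if $\bar\alpha=\bar\beta=-1$. If also $(\bar a,\bar b)\in\mathrm{ZDSstrip}$, then $D=\bar\beta\bar b-\bar\alpha\bar a\ge0$, with equality if and only if $\bar\alpha=\bar\beta=\bar a=\bar b=-1$. *)

(* Defs.v *)
From HB Require Import structures.
From mathcomp Require Import all_boot all_order all_algebra.
Set Implicit Arguments. Unset Strict Implicit. Unset Printing Implicit Defensive.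
Import Order.TTheory GRing.Theory Num.Theory.
Local Open Scope ring_scope.

Definition ZDSstrip (K : realFieldType) (R P x y : K) : Prop :=
  [/\ -1 <= x, y <= -1, x + y <= - R^-1 & - P^-1 <= x + y].

(* Main.v *)
Require Import Defs.
From mathcomp Require Import all_boot all_order all_algebra.
From mathcomp Require Import ring lra.
Import Order.TTheory GRing.Theory Num.Theory.
Local Open Scope ring_scope.

Lemma strip_lt (K : realFieldType) (R P x y : K) :
  0 < R -> R < 1 -> ZDSstrip R P x y -> x + y < -1.
Proof.
move=> R0 R1 [h1 h2 h3 h4].
have : 1 < R^-1 by rewrite invf_gt1.
lra.
Qed.

Lemma strip_main (K : realFieldType) (R P x y : K) :
  0 < R -> R < 1 -> ZDSstrip R P x y ->
  [/\ 1 <= -y, `|x| <= -y & (-y = `|x| -> x = -1 /\ y = -1)].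
Proof.
move=> R0 R1 S; have L := strip_lt _ _ _ _ _ R0 R1 S; case: S => h1 h2 _ _.
have [xp|xn] := lerP 0 x.
  rewrite ger0_norm //; constructor; [lra|lra|].
  move=> e; lra.
rewrite ltr0_norm //; constructor; [lra|lra|].
move=> e; lra.
Qed.

Theorem lemma3p1 (K : realFieldType) (R P Z alpha beta : K) :
  2^-1 < R -> R < 1 -> 0 < P -> P < R ->
  ZDSstrip R P alpha beta -> alpha + beta = - Z^-1 ->
  [/\ Num.max 1 `|alpha| <= - beta,
      (- beta = `|alpha| <-> alpha = -1 /\ beta = -1) &
      forall a b : K, ZDSstrip R P a b ->
        0 <= beta * b - alpha * a /\
        (beta * b - alpha * a = 0 <-> [/\ alpha = -1, beta = -1, a = -1 & b = -1])].
Proof.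
move=> hR hR1 hP hPR S _.
have R0 : 0 < R by apply: lt_trans hR; rewrite invr_gt0 ltr0n.
have [u1 ua ue] := strip_main _ _ _ _ _ R0 hR1 S.
split.
- by rewrite ge_max u1 ua.
- split=> // -[-> ->]; rewrite normrN normr1 opprK //.
move=> a b S2; have [v1 va ve] := strip_main _ _ _ _ _ R0 hR1 S2.
have n0 := normr_ge0 alpha; have m0 := normr_ge0 a.
have Hxa : alpha * a <= `|alpha| * `|a| by rewrite -normrM ler_norm.
have H1 : `|alpha| * `|a| <= (-beta) * `|a| by rewrite ler_wpM2r.
have H2 : (-beta) * `|a| <= (-beta) * (-b) by rewrite ler_wpM2l // (le_trans ler01 u1).
have E : beta * b = (-beta) * (-b) by rewrite mulrNN.
split; first by rewrite subr_ge0 E (le_trans Hxa (le_trans H1 H2)).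
split; last first.
  by move=> [-> -> -> ->]; rewrite mulrNN mulr1 subrr.
move=> /eqP; rewrite subr_eq0 => /eqP D.
have e2 : (-beta) * `|a| = (-beta) * (-b) by apply/eqP; rewrite eq_le H2 /= -E D (le_trans Hxa H1).
have e1 : `|alpha| * `|a| = (-beta) * `|a|.
  by apply/eqP; rewrite eq_le H1 /= e2 -E D Hxa.
have bne : -beta != 0 by rewrite gt_eqF // (lt_le_trans ltr01 u1).
have : `|a| = -b by apply: (mulfI bne).
have [ea eb] := ve (esym (mulfI bne e2)).
have ane : `|a| != 0 by rewrite ea normrN1 oner_neq0.
have [ex ey] := ue (esym (mulIf ane e1)).
by [].
Qed.
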